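(* Let $\mathcal{X}$ and $\mathcal{Y}$ be probability distributions over a finite set $\Theta$ with $D_{KL}(\mathcal{X}\|\mathcal{Y})\le\kappa$, and let $f:\Theta\to[0,1]$. If $\mathbb{E}_{x\sim\mathcal{X}}[f(x)]=1-\delta$, then $\mathbb{E}_{y\sim\mathcal{Y}}[f(y)]\ge(\delta^\delta e^{-\kappa})^{\frac{1}{1-\delta}}(1-\delta)$.
   Context: $D_{KL}(\mathcal{X}\|\mathcal{Y})=\sum_{\theta\in\mathrm{supp}(\mathcal{X})}\mathcal{X}(\theta)\log(\mathcal{X}(\theta)/\mathcal{Y}(\theta))$ with natural logarithm (it is $\infty$ if $\mathcal{Y}(\theta)=0$ for some $\theta\in\mathrm{supp}(\mathcal{X})$). Conventions: $0^0=1$, and when $\delta=1$ the expression $(\delta^\delta e^{-\kappa})^{\frac{1}{1-\delta}}(1-\delta)$ is defined to be $0$. *)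

(* Defs.v *)
From mathcomp Require Import all_boot all_order all_algebra.
From mathcomp Require Import reals.
From mathcomp.analysis Require Import sequences exp.
Set Implicit Arguments. Unset Strict Implicit. Unset Printing Implicit Defensive.
Import Order.TTheory GRing.Theory Num.Theory.
Local Open Scope ring_scope.

Definition is_distr (R : realType) (T : finType) (P : T -> R) : Prop :=
  (forall t, 0 <= P t) /\ \sum_(t : T) P t = 1.

Definition expect (R : realType) (T : finType) (P : T -> R) (f : T -> R) : R :=
  \sum_(t : T) P t * f t.

(* D_KL(X||Y) <= kappa, where D_KL is extended-real valued: it is +oo iff
   Y t = 0 for some t in supp X; otherwise it is the finite sum over supp X
   of X t * ln (X t / Y t) (natural log). *)
Definition KL_le (R : realType) (T : finType) (X Y : T -> R) (kappa : R) : Prop :=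
  (forall t, X t != 0 -> Y t != 0) /\
  \sum_(t : T | X t != 0) X t * ln (X t / Y t) <= kappa.

(* (delta^delta e^{-kappa})^{1/(1-delta)} (1-delta), defined to be 0 when
   delta = 1; powR has 0 `^ 0 = 1. *)
Definition kl_bound (R : realType) (delta kappa : R) : R :=
  if delta == 1 then 0
  else ((delta `^ delta) * expR (- kappa)) `^ (1 - delta)^-1 * (1 - delta).

(* Main.v *)
Require Import Defs.
From mathcomp Require Import all_boot all_order all_algebra.
From mathcomp Require Import reals.
From mathcomp.analysis Require Import sequences exp.
From mathcomp Require Import ring lra.
Set Implicit Arguments. Unset Strict Implicit.
Import Order.TTheory GRing.Theory Num.Theory.
Local Open Scope ring_scope.

Lemma ln_le_sub1 (R : realType) (x : R) : 0 < x -> ln x <= x - 1.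
Proof.
move=> x0; have := expR_ge1Dx (ln x); rewrite lnK ?posrE //; lra.
Qed.

Lemma ln_concave1 (R : realType) (u f : R) : 0 <= u -> 0 <= f <= 1 ->
  f * ln (1 + u) <= ln (1 + u * f).
Proof.
move=> u0 /andP[f0 f1].
have W0 : 0 < 1 + u * f by have := mulr_ge0 u0 f0; lra.
have u1 : 0 < 1 + u by lra.
have Wi : 0 < (1 + u * f)^-1 by rewrite invr_gt0.
have h1 := ln_le_sub1 Wi.
have h2 := ln_le_sub1 (divr_gt0 u1 W0).
rewrite lnV ?posrE // in h1.
rewrite ln_div ?posrE // in h2.
have e : (1 - f) * (1 + u * f)^-1 + f * ((1 + u) / (1 + u * f)) = 1.
  by field; lra.
have k1 : (1 - f) * (- ln (1 + u * f)) <= (1 - f) * ((1 + u * f)^-1 - 1).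
  by apply: ler_wpM2l; lra.
have k2 : f * (ln (1 + u) - ln (1 + u * f)) <= f * ((1 + u) / (1 + u * f) - 1).
  by apply: ler_wpM2l; lra.
nra.
Qed.

Lemma sumS1 (R : realType) (T : finType) (X : T -> R) :
  \sum_t X t = 1 -> \sum_(t | X t != 0) X t = 1.
Proof.
move=> <-; rewrite [RHS](bigID (fun t => X t != 0)) /=.
rewrite [X in _ = _ + X]big1 ?addr0 // => t /negPn /eqP //.
Qed.

Lemma jensen_ln (R : realType) (T : finType) (X w : T -> R) :
  (forall t, 0 <= X t) -> \sum_t X t = 1 -> (forall t, X t != 0 -> 0 < w t) ->
  expR (\sum_(t | X t != 0) X t * ln (w t)) <= \sum_(t | X t != 0) X t * w t.
Proof.
move=> X0 X1 w0.
have S1 := sumS1 X1.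
set W := \sum_(t | X t != 0) X t * w t.
have Wge : 0 <= W by apply: sumr_ge0 => t Xt; rewrite mulr_ge0 // ltW // w0.
have Wgt : 0 < W.
  rewrite lt_def Wge andbT; apply/eqP => /eqP.
  rewrite psumr_eq0; last by move=> t Xt; rewrite mulr_ge0 // ltW // w0.
  move/allP => H.
  move: S1; rewrite big1 => [/eqP|t Xt]; first by rewrite eq_sym oner_eq0.
  have := H t (mem_index_enum t); rewrite Xt /= mulf_eq0 => /orP[/eqP //|].
  by rewrite gt_eqF // w0.
suff : \sum_(t | X t != 0) X t * ln (w t) <= ln W.
  by move=> h; rewrite -[leRHS]lnK ?posrE // ler_expR.
have e : ln W = \sum_(t | X t != 0) X t * ln W by rewrite -mulr_suml S1 mul1r.
rewrite e -subr_le0 -sumrB.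
have : \sum_(t | X t != 0) (X t * ln (w t) - X t * ln W)
    <= \sum_(t | X t != 0) (X t * w t / W - X t).
  apply: ler_sum => t Xt.
  have wt := w0 _ Xt.
  have h := ln_le_sub1 (divr_gt0 wt Wgt).
  rewrite ln_div ?posrE // in h.
  have k := ler_wpM2l (X0 t) h.
  have -> : X t * w t / W - X t = X t * (w t / W - 1) by ring.
  have -> : X t * ln (w t) - X t * ln W = X t * (ln (w t) - ln W) by ring.
  exact: k.
move=> h; apply: le_trans h _.
rewrite sumrB -mulr_suml -/W divff ?gt_eqF // S1 subrr //.
Qed.

Lemma dv_bound (R : realType) (T : finType) (X Y : T -> R) (kappa : R) (a : T -> R) :
  is_distr X -> is_distr Y -> KL_le X Y kappa -> (forall t, X t != 0 -> 0 < a t) ->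
  expR (\sum_(t | X t != 0) X t * ln (a t) - kappa) <= \sum_(t | X t != 0) Y t * a t.
Proof.
move=> [X0 X1] [Y0 Y1] [XY K] a0.
have Xp t : X t != 0 -> 0 < X t by move=> h; rewrite lt_def h X0.
have Yp t : X t != 0 -> 0 < Y t by move=> h; rewrite lt_def XY // Y0.
have J := @jensen_ln R T X (fun t => Y t * a t / X t) X0 X1.
have J' : expR (\sum_(t | X t != 0) X t * ln (Y t * a t / X t))
   <= \sum_(t | X t != 0) X t * (Y t * a t / X t).
  apply: J => t h; rewrite divr_gt0 ?mulr_gt0 ?Xp ?Yp ?a0 //.
have e1 : \sum_(t | X t != 0) X t * ln (Y t * a t / X t) =
   \sum_(t | X t != 0) X t * ln (a t) - \sum_(t | X t != 0) X t * ln (X t / Y t).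
  rewrite -sumrB; apply: eq_bigr => t h.
  have xp := Xp t h; have yp := Yp t h.
  have -> : Y t * a t / X t = a t / (X t / Y t).
    by field; rewrite ?gt_eqF ?a0 //.
  rewrite ln_div ?posrE ?divr_gt0 ?a0 //; ring.
have e2 : \sum_(t | X t != 0) X t * (Y t * a t / X t) = \sum_(t | X t != 0) Y t * a t.
  apply: eq_bigr => t h; have xp := Xp t h; field.
  by rewrite gt_eqF.
rewrite e1 e2 in J'.
apply: le_trans J'.
by rewrite ler_expR lerD2l lerN2.
Qed.

Theorem lemma5p2 (R : realType) (T : finType) (X Y : T -> R) (kappa delta : R)
  (f : T -> R) :
  is_distr X -> is_distr Y -> KL_le X Y kappa ->
  (forall t, 0 <= f t <= 1) ->
  expect X f = 1 - delta ->
  kl_bound delta kappa <= expect Y f.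
Proof.
move=> hX hY hK hf hp.
have [X0 X1] := hX; have [Y0 Y1] := hY; have [XY _] := hK.
have f0 t : 0 <= f t by case/andP: (hf t).
have f1 t : f t <= 1 by case/andP: (hf t).
rewrite /expect in hp *.
set p := \sum_t X t * f t in hp.
set q := \sum_t Y t * f t.
have p0 : 0 <= p by apply: sumr_ge0 => t _; rewrite mulr_ge0.
have p1 : p <= 1.
  rewrite -X1; apply: ler_sum => t _; rewrite -[leRHS]mulr1 ler_wpM2l //.
have q0 : 0 <= q by apply: sumr_ge0 => t _; rewrite mulr_ge0.
have pS : \sum_(t | X t != 0) X t * f t = p.
  rewrite /p [RHS](bigID (fun t => X t != 0)) /=.
  by rewrite [X in _ = _ + X]big1 ?addr0 // => t /negPn /eqP ->; rewrite mul0r.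
have SYq : \sum_(t | X t != 0) Y t * f t <= q.
  rewrite /q [leRHS](bigID (fun t => X t != 0)) /= lerDl.
  by apply: sumr_ge0 => t _; rewrite mulr_ge0.
rewrite /kl_bound; case: eqP => [_ //| d1].
have d0 : 0 <= delta by lra.
have [dz|dpos] : delta = 0 \/ 0 < delta.
  by case: (ltrgt0P delta) => h; [right|lra|left].
-
  subst delta.
  have fS t : X t != 0 -> f t = 1.
    have S0 : \sum_t X t * (1 - f t) = 0.
      have -> : \sum_t X t * (1 - f t) = \sum_t X t - \sum_t X t * f t.
        by rewrite -sumrB; apply: eq_bigr => i _; ring.
      rewrite X1 -/p; lra.
    have g i : 0 <= X i * (1 - f i) by rewrite mulr_ge0 // subr_ge0.
    move=> h; have := psumr_eq0P (fun i _ => g i) S0 (i:=t) isT.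
    by move/eqP; rewrite mulf_eq0 (negbTE h) /= subr_eq0 => /eqP <-.
  have := @dv_bound R T X Y kappa f hX hY hK.
  have -> : \sum_(t | X t != 0) X t * ln (f t) = 0.
    by apply: big1 => t h; rewrite fS // ln1 mulr0.
  have fpos : forall t, X t != 0 -> 0 < f t by move=> t h; rewrite fS.
  move=> /(_ fpos) H.
  rewrite powRr0 mul1r subr0 invr1 powRr1 ?expR_ge0 // mulr1.
  apply: le_trans SYq; apply: le_trans H; rewrite sub0r //.
- have ppos : 0 < p.
    rewrite lt_def p0 andbT; apply/eqP => h; apply: d1; lra.
  have qpos : 0 < q.
    rewrite lt_def q0 andbT; apply/eqP => qz.
    have H := psumr_eq0P (fun i _ => mulr_ge0 (Y0 i) (f0 i)) qz.
    suff : p = 0 by lra.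
    apply: big1 => t _; case: (eqVneq (X t) 0) => [->|h]; first by rewrite mul0r.
    have := H t isT; move/eqP; rewrite mulf_eq0 (negbTE (XY t h)) /= => /eqP ->.
    by rewrite mulr0.
  set u := p / (q * delta).
  have upos : 0 < u by rewrite divr_gt0 // mulr_gt0.
  have apos : forall t, X t != 0 -> 0 < 1 + u * f t.
    by move=> t _; have := mulr_ge0 (ltW upos) (f0 t); lra.
  have H := @dv_bound R T X Y kappa (fun t => 1 + u * f t) hX hY hK apos.
  have L1 : p * ln (1 + u) <= \sum_(t | X t != 0) X t * ln (1 + u * f t).
    rewrite -pS mulr_suml; apply: ler_sum => t _.
    rewrite -mulrA; apply: ler_wpM2l => //; exact: ln_concave1 (ltW upos) (hf t).
  have L2 : \sum_(t | X t != 0) Y t * (1 + u * f t) <= 1 + u * q.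
    apply: le_trans (_ : \sum_t Y t * (1 + u * f t) <= _).
      rewrite [leRHS](bigID (fun t => X t != 0)) /= lerDl.
      by apply: sumr_ge0 => t _; rewrite mulr_ge0 // addr_ge0 // mulr_ge0 // ltW.
    have -> : \sum_t Y t * (1 + u * f t) = \sum_t Y t + u * q.
      rewrite /q mulr_sumr -big_split /=; apply: eq_bigr => t _; ring.
    by rewrite Y1.
  have e1 : 1 + u * q = delta^-1.
    rewrite /u hp; field; rewrite ?gt_eqF //; lra.
  rewrite e1 in L2.
  have H2 : expR (p * ln (1 + u) - kappa) <= delta^-1.
    apply: le_trans L2; apply: le_trans H; rewrite ler_expR lerD2r //.
  have H3 : p * ln (1 + u) - kappa <= - ln delta.
    rewrite -lnV ?posrE // -ler_expR lnK ?posrE ?invr_gt0 //.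
  have H4 : ln p - ln q - ln delta <= ln (1 + u).
    rewrite -ln_div ?posrE // -ln_div ?posrE ?divr_gt0 //.
    rewrite ler_ln ?posrE ?divr_gt0 ?addr_gt0 //.
    have -> : p / q / delta = u by rewrite /u; field; rewrite ?gt_eqF.
    lra.
  have hd : delta `^ delta = expR (delta * ln delta) by rewrite /powR gt_eqF.
  rewrite hd -expRD -expRM.
  have -> : 1 - delta = p by lra.
  have Z : (delta * ln delta + - kappa) / p <= ln q - ln p.
    rewrite ler_pdivrMr //.
    have H5 : 0 <= p * (ln (1 + u) - (ln p - ln q - ln delta)).
      by apply: mulr_ge0; lra.
    have E1 : p * (ln (1 + u) - (ln p - ln q - ln delta)) =
      p * ln (1 + u) - p * ln p + p * ln q + p * ln delta by ring.
    have E2 : delta * ln delta = ln delta - p * ln delta by rewrite hp; ring.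
    have E3 : (ln q - ln p) * p = p * ln q - p * ln p by ring.
    rewrite E1 in H5; rewrite E2 E3; lra.
  apply: le_trans (_ : expR (ln q - ln p) * p <= q).
    by rewrite ler_wpM2r // ler_expR.
  by rewrite expRB !lnK ?posrE // divfK // gt_eqF.
Qed.
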